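(* Let $A \in \mathbb{R}^{n\times d}$, $b \in \mathbb{R}^n$, let $\lbrace w_l : l\geq 0\rbrace \subset \mathbb{R}^n$ be an arbitrary sequence, let $x_0 \in \mathbb{R}^d$ be arbitrary and $S_0 = I_d$, and for $l \geq 0$ define $$x_{l+1} = \begin{cases} x_l + \dfrac{S_l A' w_l w_l'(b - A x_l)}{w_l' A S_l A' w_l} & \text{if } S_l A'w_l \neq 0,\\ x_l & \text{otherwise,}\end{cases}\qquad S_{l+1} = \begin{cases} S_l - \dfrac{S_l A' w_l w_l' A S_l}{w_l' A S_l A' w_l} & \text{if } S_l A' w_l \neq 0,\\ S_l & \text{otherwise.}\end{cases}$$ Then for every $l \geq 0$, $x_{l+1} \in \mathrm{span}\lbrace x_0, A'w_0,\ldots,A'w_l\rbrace$.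
   Context: $A'$ denotes transpose; $I_d$ is the $d \times d$ identity. *)

(* Defs.v *)
(* Vectors in R^k are column vectors 'cV[R]_k; A' is A^T. *)
From HB Require Import structures.
From mathcomp Require Import all_boot all_order all_algebra.
From mathcomp Require Import reals.
Set Implicit Arguments. Unset Strict Implicit. Unset Printing Implicit Defensive.
Import Order.TTheory GRing.Theory Num.Theory.
Local Open Scope ring_scope.

Definition proj_step (R : realType) (n d : nat) (A : 'M[R]_(n, d)) (b : 'cV[R]_n)
    (wl : 'cV[R]_n) (p : 'cV[R]_d * 'M[R]_d) : 'cV[R]_d * 'M[R]_d :=
  let x := p.1 in let S := p.2 in
  let v := S *m A^T *m wl in
  if v != 0 then
    let den := (wl^T *m A *m S *m A^T *m wl) 0 0 in
    (x + den^-1 *: (S *m A^T *m wl *m wl^T *m (b - A *m x)),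
     S - den^-1 *: (S *m A^T *m wl *m wl^T *m A *m S))
  else (x, S).

Fixpoint proj_iter (R : realType) (n d : nat) (A : 'M[R]_(n, d)) (b : 'cV[R]_n)
    (w : nat -> 'cV[R]_n) (x0 : 'cV[R]_d) (l : nat) : 'cV[R]_d * 'M[R]_d :=
  match l with
  | 0 => (x0, 1%:M)
  | l'.+1 => proj_step A b (w l') (proj_iter A b w x0 l')
  end.

(* Main.v *)
Require Import Defs.
From HB Require Import structures.
From mathcomp Require Import all_boot all_order all_algebra.
From mathcomp Require Import reals.
Import Order.TTheory GRing.Theory Num.Theory.
Local Open Scope ring_scope.

Section Aux.
Variables (R : realType) (n d : nat) (A : 'M[R]_(n, d)) (b : 'cV[R]_n)
    (w : nat -> 'cV[R]_n) (x0 : 'cV[R]_d).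

Definition U l := <<[seq A^T *m w i | i <- iota 0 l]>>%VS.

Lemma U_step l : (U l + <[A^T *m w l]> = U l.+1)%VS.
Proof. have E : iota 0 l.+1 = iota 0 l ++ [:: l] by rewrite -addn1 iotaD.
by rewrite /U E map_cat span_cat /= span_seq1. Qed.

Lemma U_mono l : (U l <= U l.+1)%VS.
Proof. by rewrite -U_step addvSl. Qed.

Lemma U_new l : A^T *m w l \in U l.+1.
Proof. by rewrite -U_step; apply: (subvP (addvSr _ _)); apply: memv_line. Qed.

Lemma col1 (v : 'cV[R]_d) (M : 'M[R]_1) : v *m M = M 0 0 *: v.
Proof. by rewrite {1}[M]mx11_scalar mul_mx_scalar. Qed.

Lemma inv l :
  (forall v, v - (proj_iter A b w x0 l).2 *m v \in U l) /\
  (proj_iter A b w x0 l).1 \in (<[x0]> + U l)%VS.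
Proof.
elim: l => [|l [IS IX]] /=.
  split; first by move=> v; rewrite mul1mx subrr mem0v.
  by apply: (subvP (addvSl _ _)); apply: memv_line.
case: (proj_iter A b w x0 l) IS IX => x S /= IS IX.
have hSw : S *m A^T *m w l \in U l.+1.
  have -> : S *m A^T *m w l = A^T *m w l - (A^T *m w l - S *m (A^T *m w l)).
    by rewrite opprB addrC subrK mulmxA.
  by apply: memvB; [apply: U_new | apply: (subvP (U_mono l)); apply: IS].
have sub : (<[x0]> + U l <= <[x0]> + U l.+1)%VS by apply: addvS => //; apply: U_mono.
rewrite /proj_step /=; case: ifP => _ /=; split.
- move=> v; rewrite mulmxBl opprB [X in v + X]addrC addrA -scalemxAl.
  apply: memvD; first by apply: (subvP (U_mono l)); apply: IS.
  apply: memvZ.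
  have -> : S *m A^T *m w l *m (w l)^T *m A *m S *m v =
     (S *m A^T *m w l) *m ((w l)^T *m A *m S *m v) by rewrite !mulmxA.
  by rewrite col1; apply: memvZ.
- apply: memvD; first exact: (subvP sub).
  apply: memvZ.
  have -> : S *m A^T *m w l *m (w l)^T *m (b - A *m x) =
     (S *m A^T *m w l) *m ((w l)^T *m (b - A *m x)) by rewrite !mulmxA.
  rewrite col1; apply: memvZ.
  by apply: (subvP (addvSr _ _)).
- by move=> v; apply: (subvP (U_mono l)); apply: IS.
- exact: (subvP sub).
Qed.
End Aux.

Theorem mainTheorem3 (R : realType) (n d : nat) (A : 'M[R]_(n, d)) (b : 'cV[R]_n)
    (w : nat -> 'cV[R]_n) (x0 : 'cV[R]_d) (l : nat) :
  (proj_iter A b w x0 l.+1).1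
    \in <<x0 :: [seq A^T *m w i | i <- iota 0 l.+1]>>%VS.
Proof.
by rewrite span_cons; case: (@inv R n d A b w x0 l.+1).
Qed.
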